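(* Let $T$ be a tree with colour classes $A$ and $B$ such that $a=|A|\le|B|$ and $k=\min\{d_T(x):x\in A\}\ge 2$. Let $\tilde T\in\mathcal{H}(T)$ be obtained from $T$ by a vertex split on a set $U\subseteq V(T)$, and let $S=U\cap A$ be the set of splitting vertices in $A$, $s=|S|$. If $s\ge 1$, then $\nu(\tilde T)\ge a-1+k$.
   Context: $\nu(G)$ is the matching number. A vertex split on a vertex $v$ of $H$ replaces $v$ by an independent set of $d(v)$ new vertices, each adjacent to exactly one vertex of $N_H(v)$, distinct new vertices adjacent to distinct neighbours; a vertex split on $U\subseteq V(H)$ applies this to the vertices of $U$ one by one. The splitting family $\mathcal{H}(H)$ is the family of all graphs obtained from $H$ by a vertex split on some $U\subseteq V(H)$. *)

(* Defs.v *)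
From mathcomp Require Import all_boot.
Set Implicit Arguments. Unset Strict Implicit. Unset Printing Implicit Defensive.

Section Defs.
Variable V : finType.
Implicit Types (e : rel V) (A B U : {set V}).

Definition deg e (x : V) : nat := #|[set y | e x y]|.

Definition simple_graph e := symmetric e /\ irreflexive e.

Definition connected_graph e := forall x y : V, connect e x y.

Definition acyclic e :=
  forall c : seq V, uniq c -> 3 <= size c -> ~~ cycle e c.

Definition is_tree e :=
  [/\ simple_graph e, 0 < #|V|, connected_graph e & acyclic e].

Definition colour_classes e A B :=
  [/\ A :&: B = set0, A :|: B = setT &
      forall x y, e x y -> ((x \in A) && (y \in B)) || ((x \in B) && (y \in A))].

(* Vertices of the split graph:
   (v, None)    for v \notin U  (the vertex v itself), and
   (v, Some w)  for v \in U and w a neighbour of v  (the new vertex of v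
                attached to w). *)
Definition split_vert e U (x : V * option V) : bool :=
  match x.2 with
  | None => x.1 \notin U
  | Some w => (x.1 \in U) && e x.1 w
  end.

Definition split_copy U (u v : V) : V * option V :=
  if u \in U then (u, Some v) else (u, None).

(* each edge uv of T becomes the edge between the copy of u for v and the copy of v for u *)
Definition split_edge e U (x y : V * option V) : bool :=
  [&& e x.1 y.1, x == split_copy U x.1 y.1 & y == split_copy U y.1 x.1].

Definition split_graph e U : rel {x : V * option V | split_vert e U x} :=
  fun x y => split_edge e U (val x) (val y).

End Defs.
Arguments split_graph {V} e U.
Arguments split_vert {V} e U x.

Section Matching.
Variable W : finType.
Variable r : rel W.

Definition is_matching (M : {set {set W}}) : bool :=
  [forall f in M, exists x, exists y, r x y && (f == [set x; y])] &&
  [forall f in M, forall g in M, (f != g) ==> [disjoint f & g]].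

Definition matching_number : nat :=
  \max_(M : {set {set W}} | is_matching M) #|M|.
End Matching.

(* Main.v *)
Require Import Defs.
From mathcomp Require Import all_boot.
From mathcomp Require Import zify.
Set Implicit Arguments. Unset Strict Implicit. Unset Printing Implicit Defensive.

Section Tree.
Variables (V : finType) (e : rel V) (s : V).
Hypotheses (esy : symmetric e) (eirr : irreflexive e)
  (econn : connected_graph e) (eacy : acyclic e).
Variables (A U : {set V}).
Hypotheses (sA : s \in A) (sU : s \in U)
  (colA : forall x y, e x y -> (x \in A) = ~~ (y \in A))
  (degA : forall x, x \in A -> 1 < deg e x).

Definition step (X : {set V}) := X :|: [set y | [exists z in X, e z y]].
Definition R n := iter n step [set s].

Lemma R_S n : R n.+1 = step (R n). Proof. by []. Qed.

Lemma R_sub m n : m <= n -> R m \subset R n.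
Proof.
move=> /subnKC <-; elim: (n - m) => [|j IH]; first by rewrite addn0.
rewrite addnS R_S /step; exact: subset_trans IH (subsetUl _ _).
Qed.

Lemma R_step x y n : x \in R n -> e x y -> y \in R n.+1.
Proof.
move=> xR exy; rewrite R_S /step inE; apply/orP; right; rewrite inE.
by apply/exists_inP; exists x.
Qed.

Lemma R_path p x n : path e x p -> x \in R n -> last x p \in R (n + size p).
Proof.
elim: p x n => [|y p IH] x n /=; first by rewrite addn0.
move=> /andP[exy pp] xR; rewrite addnS -addSn; apply: IH pp _.
exact: R_step xR exy.
Qed.

Lemma ex_R x : exists n, x \in R n.
Proof.
have /connectP [p pp ->] := econn s x; exists (0 + size p).
by apply: R_path pp _; rewrite /R /= inE.
Qed.

Definition dist x := ex_minn (ex_R x).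

Lemma dist_R x : x \in R (dist x).
Proof. by rewrite /dist; case: ex_minnP. Qed.

Lemma dist_min x n : x \in R n -> dist x <= n.
Proof. by rewrite /dist; case: ex_minnP => m _ H /H. Qed.

Lemma inR x n : (x \in R n) = (dist x <= n).
Proof.
apply/idP/idP; first exact: dist_min.
by move=> h; exact: (subsetP (R_sub h)) _ (dist_R x).
Qed.

Lemma dist_s : dist s = 0.
Proof. by apply/eqP; rewrite -leqn0 -inR /R /= inE. Qed.

Lemma dist0 x : dist x = 0 -> x = s.
Proof. by move=> h; have := dist_R x; rewrite h /R /= inE => /eqP. Qed.

Lemma dist_edge x y : e x y -> dist y <= (dist x).+1.
Proof. by move=> h; rewrite -inR; exact: R_step (dist_R x) h. Qed.

Lemma dist_pred x m : dist x = m.+1 -> exists2 y, e y x & dist y = m.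
Proof.
move=> h; have := dist_R x; rewrite h R_S /step inE => /orP [|].
  by rewrite inR h ltnn.
rewrite inE => /exists_inP [z zR ezx]; exists z => //.
move: zR; rewrite inR => zR; have := dist_edge ezx; rewrite h; lia.
Qed.

Lemma dist_parity x : (x \in A) = ~~ odd (dist x).
Proof.
suff H: forall n x, dist x = n -> (x \in A) = ~~ odd n by exact: H.
elim=> [|n IH] y h; first by rewrite (dist0 h) sA.
have [z ezy dz] := dist_pred h.
have eyz : e y z by rewrite esy.
by rewrite (colA eyz) (IH z dz) /= negbK.
Qed.

Lemma down_uniq x y1 y2 : e y1 x -> e y2 x -> dist y1 < dist x ->
  dist y2 < dist x -> y1 = y2.
Proof.
move=> e1 e2 d1 d2; set d := dist x in d1 d2.
pose e' := [rel a b | [&& e a b, dist a < d & dist b < d]].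
have e'sym : symmetric e'.
  move=> a b /=; rewrite esy.
  by case: (dist a < d); case: (dist b < d); rewrite /= ?andbT ?andbF.
have tos : forall n y, dist y = n -> n < d -> connect e' y s.
  elim=> [|n IH] y dy lt; first by rewrite (dist0 dy) connect0.
  have [z ezy dz] := dist_pred dy.
  apply: connect_trans (connect1 _) (IH z dz (ltnW lt)).
  by rewrite /= esy ezy dy dz lt (ltnW lt).
have c21 : connect e' y2 y1.
  apply: connect_trans (tos _ y2 erefl d2) _.
  rewrite (sym_connect_sym e'sym); exact: (tos _ y1 erefl d1).
case: (eqVneq y1 y2) => // neq; exfalso.
case/connectP: c21 => p pp lp.
move: lp; case/shortenP: pp => p' pp' up' _ lp'.
have allp : forall a q, path e' a q -> all (fun b => dist b < d) q.
  move=> a q; elim: q a => [|b q IH] a //= /andP [/and3P [_ _ hb] pq].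
  by rewrite hb (IH b pq).
have Hu : uniq (x :: y2 :: p').
  rewrite cons_uniq up' andbT; apply/negP => xin.
  have : all (fun b => dist b < d) (y2 :: p') by rewrite /= d2 (allp _ _ pp').
  by move=> /allP /(_ x xin); rewrite ltnn.
have Hs : 3 <= size (x :: y2 :: p').
  by case: p' {pp' up' Hu} lp' => //= /(@esym _ _ _) h; rewrite h eqxx in neq.
have := eacy Hu Hs.
rewrite /cycle rcons_cons /= (esy x y2) e2 rcons_path -lp' e1 andbT.
rewrite (sub_path _ pp') //.
by move=> a b /and3P [].
Qed.

Lemma dist_nb x y : e x y -> dist y = (dist x).+1 \/ dist x = (dist y).+1.
Proof.
move=> exy; have h1 := dist_edge exy.
have eyx : e y x by rewrite esy.
have h2 := dist_edge eyx.
have ne : dist x <> dist y.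
  move=> h; have := colA exy; rewrite !dist_parity h.
  by case: (odd (dist y)).
lia.
Qed.

Lemma child_ex x : 1 < deg e x -> exists y, e x y && (dist y == (dist x).+1).
Proof.
move=> dg.
case: (pickP (fun y => e x y && (dist y == (dist x).+1))) => [y H|H].
  by exists y.
exfalso.
have down : forall y, e x y -> dist y < dist x.
  move=> y exy; have := H y; rewrite exy /=.
  by case: (dist_nb exy) => ->; rewrite ?eqxx // ltnSn.
move: dg; rewrite /deg => /card_gt1P [y1 [y2 [h1 h2 ne]]].
rewrite inE in h1; rewrite inE in h2.
have e1 : e y1 x by rewrite esy.
have e2 : e y2 x by rewrite esy.
by rewrite (down_uniq e1 e2 (down _ h1) (down _ h2)) eqxx in ne.
Qed.

Definition c x := odflt x [pick y | e x y && (dist y == (dist x).+1)].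

Lemma c_spec x : 1 < deg e x -> e x (c x) /\ dist (c x) = (dist x).+1.
Proof.
move=> dg; rewrite /c; case: pickP => [y /andP [h /eqP ->] | H] //.
by have [y hy] := child_ex dg; rewrite H in hy.
Qed.

Lemma c_inj x1 x2 : 1 < deg e x1 -> 1 < deg e x2 -> c x1 = c x2 -> x1 = x2.
Proof.
move=> g1 g2 h; have [a1 b1] := c_spec g1; have [a2 b2] := c_spec g2.
have a2' : e x2 (c x1) by rewrite h.
apply: (down_uniq a1 a2'); first by rewrite b1 ltnSn.
by rewrite h b2 ltnSn.
Qed.

Definition inF (p : V * V) :=
  ((p.1 == s) && e s p.2) || ((p.1 \in A :\ s) && (p.2 == c p.1)).

Lemma AsA x : x \in A :\ s -> x \in A.
Proof. by rewrite inE => /andP []. Qed.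

Lemma inF_prop p : inF p -> [/\ e p.1 p.2, p.1 \in A & p.2 \notin A].
Proof.
case/orP => [/andP[/eqP -> h]|/andP[xa /eqP ->]].
  by split => //; rewrite -(colA h).
have [h _] := c_spec (degA (AsA xa)).
by split => //; [exact: AsA | rewrite -(colA h); exact: AsA].
Qed.

Lemma dist_nbs y : e s y -> dist y = 1.
Proof.
move=> h; have := dist_edge h; rewrite dist_s.
have : dist y <> 0 by move=> /dist0 ys; rewrite ys eirr in h.
lia.
Qed.

Lemma dist_c x : x \in A :\ s -> 1 < dist (c x).
Proof.
move=> xa; have [_ ->] := c_spec (degA (AsA xa)).
have : dist x <> 0.
  by move=> /dist0 xs; move: xa; rewrite xs !inE eqxx.
lia.
Qed.

Lemma sc_fst u v : (split_copy U u v).1 = u.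
Proof. by rewrite /split_copy; case: ifP. Qed.

Lemma sc_eq u v u' v' : split_copy U u v = split_copy U u' v' ->
  u = u' /\ (u \in U -> v = v').
Proof.
rewrite /split_copy; case: ifP => hu; case: ifP => hu' //;
  case=> *; subst; split=> //; by rewrite ?hu.
Qed.

Lemma share_A p q : inF p -> inF q ->
  split_copy U p.1 p.2 = split_copy U q.1 q.2 -> p = q.
Proof.
case: p q => u v [u' v'] /= Fp Fq /sc_eq [eu hv]; subst u'.
case uU: (u \in U); first by rewrite hv.
have hF : forall w, inF (u, w) -> w = c u.
  move=> w /orP [/andP [/eqP /= us _]| /andP [_ /eqP /= ->]] //.
  by rewrite /= us sU in uU.
by rewrite (hF _ Fp) (hF _ Fq).
Qed.

Lemma share_B p q : inF p -> inF q ->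
  split_copy U p.2 p.1 = split_copy U q.2 q.1 -> p = q.
Proof.
case: p q => u v [u' v'] /= Fp Fq /sc_eq [ev hu]; subst v'.
case vU: (v \in U); first by rewrite hu.
case/orP: Fp => [/andP[/eqP eu esv]|/andP[ua /eqP vc]];
  case/orP: Fq => [/andP[/eqP eu' esv']|/andP[ua' /eqP vc']] /=.
- by rewrite /= in eu eu'; rewrite eu eu'.
- by have := dist_c ua'; rewrite /= in vc'; rewrite -vc' (dist_nbs esv).
- by have := dist_c ua; rewrite /= in vc; rewrite -vc (dist_nbs esv').
- rewrite /= in vc vc' ua ua'.
  congr pair; apply: c_inj (degA (AsA ua)) (degA (AsA ua')) _.
  by rewrite -vc -vc'.
Qed.

Lemma share_X p q : inF p -> inF q ->
  split_copy U p.1 p.2 = split_copy U q.2 q.1 -> False.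
Proof.
move=> Fp Fq /sc_eq [h _].
have [_ pa _] := inF_prop Fp; have [_ _ qb] := inF_prop Fq.
by rewrite h in pa; rewrite pa in qb.
Qed.

Definition fS (p : V * V) : {set {x : V * option V | split_vert e U x}} :=
  [set w | (val w == split_copy U p.1 p.2) || (val w == split_copy U p.2 p.1)].

Lemma fS_share p q w : inF p -> inF q -> w \in fS p -> w \in fS q -> p = q.
Proof.
move=> Fp Fq; rewrite !inE => /orP [/eqP h1|/eqP h1] /orP [/eqP h2|/eqP h2].
- by apply: share_A Fp Fq _; rewrite -h1 -h2.
- by exfalso; apply: share_X Fp Fq _; rewrite -h1 -h2.
- by exfalso; apply: share_X Fq Fp _; rewrite -h1 -h2.
- by apply: share_B Fp Fq _; rewrite -h1 -h2.
Qed.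

Lemma sv_ok u v : e u v -> split_vert e U (split_copy U u v).
Proof.
by move=> h; rewrite /split_vert /split_copy; case: ifP => hu /=; rewrite ?hu ?h.
Qed.

Lemma mem_fS p (h : e p.1 p.2) :
  (exist (fun x => split_vert e U x) (split_copy U p.1 p.2) (sv_ok h)) \in fS p.
Proof. by rewrite inE eqxx. Qed.

Definition F := [set p | inF p].
Definition M := fS @: F.

Lemma M_matching : is_matching (split_graph e U) M.
Proof.
apply/andP; split.
- apply/forall_inP => f /imsetP [p]; rewrite inE => Fp ->.
  have [h _ _] := inF_prop Fp; have h' : e p.2 p.1 by rewrite esy.
  apply/existsP; exists (exist (fun x => split_vert e U x) _ (sv_ok h)); apply/existsP.
  exists (exist (fun x => split_vert e U x) _ (sv_ok h')); apply/andP; split.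
    by rewrite /split_graph /split_edge /= !sc_fst h !eqxx.
  apply/eqP/setP => w; rewrite !inE -!val_eqE /=.
  done.
- apply/forall_inP => f /imsetP [p]; rewrite inE => Fp ->.
  apply/forall_inP => g /imsetP [q]; rewrite inE => Fq ->.
  apply/implyP => neq; rewrite -setI_eq0; apply/eqP/setP => w.
  rewrite in_set0 in_setI; apply/negP => /andP [w1 w2].
  by rewrite (fS_share Fp Fq w1 w2) eqxx in neq.
Qed.

Lemma card_M : #|M| = #|F|.
Proof.
apply: card_in_imset => p q; rewrite !inE => Fp Fq eq.
have [h _ _] := inF_prop Fp.
apply: (fS_share (w := exist (fun x => split_vert e U x) _ (sv_ok h)) Fp Fq); first exact: mem_fS.
by rewrite -eq; exact: mem_fS.
Qed.

Lemma card_F : deg e s + (#|A| - 1) <= #|F|.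
Proof.
pose E1 := [set (s, y) | y in [set y | e s y]].
pose E2 := [set (x, c x) | x in A :\ s].
have -> : deg e s = #|E1| by rewrite card_imset //; move=> y y' [].
have -> : #|A| - 1 = #|E2|.
  by rewrite card_imset ?(cardsD1 s A) ?sA ?add1n ?subn1 // => x x' [].
have dis : E1 :&: E2 = set0.
  apply/setP => p; rewrite !inE; apply/negP => /andP [/imsetP [y _ ->]].
  move=> /imsetP [x]; rewrite inE => /andP [nxs _] [sx _].
  by rewrite -sx !inE eqxx in nxs.
have : #|E1 :|: E2| <= #|F|.
  apply/subset_leq_card/subsetP => p; rewrite !inE.
  case/orP => [/imsetP [y] | /imsetP [x]].
    by rewrite inE => yin ->; rewrite /inF /= eqxx yin.
  by move=> xin ->; rewrite /inF /= xin eqxx orbT.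
by rewrite cardsU dis cards0 subn0.
Qed.

Lemma main_aux k : k <= deg e s ->
  #|A| - 1 + k <= matching_number (split_graph e U).
Proof.
move=> dk; rewrite /matching_number.
apply: (leq_trans _ (leq_bigmax_cond _ M_matching)).
rewrite card_M; have := card_F; lia.
Qed.

End Tree.

Theorem lemma2p5 (V : finType) (e : rel V) (A B U : {set V}) (k : nat) :
  is_tree e ->
  colour_classes e A B ->
  #|A| <= #|B| ->
  (exists2 x, x \in A & deg e x = k) ->
  (forall x, x \in A -> k <= deg e x) ->
  2 <= k ->
  1 <= #|U :&: A| ->
  #|A| - 1 + k <= matching_number (split_graph e U).
Proof.
move=> [[esy eirr] _ econn eacy] [AB0 ABT col] _ _ degk k2 /card_gt0P [s].
rewrite inE => /andP [sU sA].
have notAB : forall z, z \in A -> z \in B -> False.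
  move=> z za zb; have : z \in A :&: B by rewrite inE za zb.
  by rewrite AB0 inE.
have colA : forall x y, e x y -> (x \in A) = ~~ (y \in A).
  move=> x y /col /orP [/andP[xa yb]|/andP[xb ya]].
    rewrite xa; case ya: (y \in A) => //; by have := notAB _ ya yb.
  by rewrite ya /=; apply/negbTE/negP => xa; exact: notAB xa xb.
have degA : forall x, x \in A -> 1 < deg e x.
  by move=> x xa; exact: leq_trans k2 (degk x xa).
exact: (main_aux esy eirr econn eacy sA sU colA degA (degk s sA)).
Qed.
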